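(* Let $F= \left( \begin{bmatrix} f \\ g \end{bmatrix}, \begin{bmatrix} \alpha & \beta \\ \beta^\dagger & \delta \end{bmatrix}, \begin{bmatrix} s \\ t \end{bmatrix} \right): A \to B \otimes C$ be a map in $\mathfrak{G}\left[ (\mathbb{X}, \dagger) \right]_X$, and let $m: B \to C$ be a conditional generator for $\begin{bmatrix} \alpha & \beta \\ \beta^\dagger & \delta \end{bmatrix}$. Then define the map $G_m: B \otimes A \to C$ in $\mathfrak{G}\left[ (\mathbb{X}, \dagger) \right]_X$ as the triple: \begin{align*} G_m = \left( \begin{bmatrix} m & g - m \circ f \end{bmatrix}, \delta - m \circ \beta, t - m\circ s \right) \end{align*} Then $G_m$ is a conditional of $F$.
   Context: Let $(\mathbb{X}, \dagger)$ be a dagger additive category (a dagger category enriched in abelian groups with additive dagger and finite biproducts satisfying $\pi_j^\dagger = \iota_j$; maps between biproducts are written as matrices and the dagger acts as conjugate transpose) and fix an object $X$. A map $p$ is $\dagger$-positive if $p = \phi^\dagger \circ \phi$ for some $\phi$. The Gauss construction $\mathfrak{G}\left[ (\mathbb{X}, \dagger) \right]_X$ is the Markov category with the objects of $\mathbb{X}$, maps $A \to B$ the triples $(f,p,x)$ with $f: A \to B$, $p: B \to B$ $\dagger$-positive, $x: X \to B$; identities $\mathsf{Id}_A = (\mathsf{id}_A,0,0)$; composition $(g,q,y) \circ (f,p,x) = (g \circ f, q + g \circ p \circ g^\dagger, y + g \circ x)$; $A \otimes B = A \oplus B$, $(f,p,x) \otimes (g,q,y) = \left(f \oplus g, p \oplus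 q, \begin{bmatrix} x \\ y \end{bmatrix}\right)$; copy $\mathsf{copy}_A = \left(\begin{bmatrix} \mathsf{id}_A \\ \mathsf{id}_A \end{bmatrix}, 0, 0\right)$, delete $\mathsf{del}_A = (0,0,0): A \to \mathsf{0}$. In $F$, $f: A \to B$, $g: A \to C$, $\alpha: B \to B$, $\beta: C \to B$, $\delta: C \to C$, $s: X \to B$, $t: X \to C$. A conditional generator for a $\dagger$-positive map $\begin{bmatrix} \alpha & \beta \\ \beta^\dagger & \delta \end{bmatrix}: B \oplus C \to B \oplus C$ is a map $m: B \to C$ such that (i) $m \circ \alpha = \beta^\dagger$ and (ii) $\delta - m \circ \beta$ is $\dagger$-positive. A map $G: B \otimes A \to C$ is a conditional of $F: A \to B \otimes C$ if $(\mathsf{Id}_B \otimes G) \circ (\mathsf{copy}_B \otimes \mathsf{Id}_A) \circ (\mathsf{Id}_B \otimes \mathsf{del}_C \otimes \mathsf{Id}_A) \circ (F \otimes \mathsf{Id}_A) \circ \mathsf{copy}_A = F$. *)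

(* Defs.v *)
From HB Require Import structures.
From mathcomp Require Import all_boot all_algebra.
Set Implicit Arguments. Unset Strict Implicit. Unset Printing Implicit Defensive.
Import GRing.Theory.
Local Open Scope ring_scope.

Record DagAddCat := {
  Ob : Type;
  XHom : Ob -> Ob -> zmodType;
  xcomp : forall A B C : Ob, XHom B C -> XHom A B -> XHom A C;
  xid : forall A : Ob, XHom A A;
  xdag : forall A B : Ob, XHom A B -> XHom B A;
  comp_assoc : forall A B C D (h : XHom C D) (g : XHom B C) (f : XHom A B),
      xcomp h (xcomp g f) = xcomp (xcomp h g) f;
  comp_id_l : forall A B (f : XHom A B), xcomp (xid B) f = f;
  comp_id_r : forall A B (f : XHom A B), xcomp f (xid A) = f;
  comp_addl : forall A B C (g g' : XHom B C) (f : XHom A B),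
      xcomp (g + g') f = xcomp g f + xcomp g' f;
  comp_addr : forall A B C (g : XHom B C) (f f' : XHom A B),
      xcomp g (f + f') = xcomp g f + xcomp g f';
  dag_comp : forall A B C (g : XHom B C) (f : XHom A B),
      xdag (xcomp g f) = xcomp (xdag f) (xdag g);
  dag_id : forall A, xdag (xid A) = xid A;
  dag_invol : forall A B (f : XHom A B), xdag (xdag f) = f;
  dag_add : forall A B (f f' : XHom A B), xdag (f + f') = xdag f + xdag f';
  zob : Ob;
  zob_zero : xid zob = 0;
  bip : Ob -> Ob -> Ob;
  pi1 : forall A B, XHom (bip A B) A;
  pi2 : forall A B, XHom (bip A B) B;
  io1 : forall A B, XHom A (bip A B);
  io2 : forall A B, XHom B (bip A B);
  pi1_io1 : forall A B, xcomp (pi1 A B) (io1 A B) = xid A;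
  pi2_io2 : forall A B, xcomp (pi2 A B) (io2 A B) = xid B;
  pi1_io2 : forall A B, xcomp (pi1 A B) (io2 A B) = 0;
  pi2_io1 : forall A B, xcomp (pi2 A B) (io1 A B) = 0;
  bip_id : forall A B, xcomp (io1 A B) (pi1 A B) + xcomp (io2 A B) (pi2 A B)
                       = xid (bip A B);
  dag_pi1 : forall A B, xdag (pi1 A B) = io1 A B;
  dag_pi2 : forall A B, xdag (pi2 A B) = io2 A B
}.

Arguments XHom : clear implicits.
Arguments xcomp {_ _ _ _}.
Arguments xid {_}.
Arguments xdag {_ _ _}.
Arguments zob {_}.
Arguments bip {_}.
Arguments pi1 {_}. Arguments pi2 {_}. Arguments io1 {_}. Arguments io2 {_}.

Section Matrices.
Variable X : DagAddCat.
Local Notation Obj := (Ob X).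
Local Notation Hm := (XHom X).

Definition mcol (A B C : Obj) (f : Hm A B) (g : Hm A C) : Hm A (bip B C) :=
  xcomp (io1 B C) f + xcomp (io2 B C) g.
Definition mrow (A B C : Obj) (f : Hm A C) (g : Hm B C) : Hm (bip A B) C :=
  xcomp f (pi1 A B) + xcomp g (pi2 A B).
(* 2x2 block matrix [[a, b], [c, d]] : A1 (+) A2 -> B1 (+) B2 *)
Definition mblock (A1 A2 B1 B2 : Obj) (a : Hm A1 B1) (b : Hm A2 B1)
    (c : Hm A1 B2) (d : Hm A2 B2) : Hm (bip A1 A2) (bip B1 B2) :=
  mcol (mrow a b) (mrow c d).
Definition msum (A B C D : Obj) (f : Hm A B) (g : Hm C D) :
    Hm (bip A C) (bip B D) := mblock f 0 0 g.

Definition dpositive (A : Obj) (p : Hm A A) : Prop :=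
  exists (Y : Obj) (phi : Hm A Y), p = xcomp (xdag phi) phi.

Definition bassoc (P Q R : Obj) : Hm (bip (bip P Q) R) (bip P (bip Q R)) :=
  mcol (xcomp (pi1 P Q) (pi1 (bip P Q) R))
       (mcol (xcomp (pi2 P Q) (pi1 (bip P Q) R)) (pi2 (bip P Q) R)).
Definition brunit (B : Obj) : Hm (bip B zob) B := pi1 B zob.

Definition cond_generator (B C : Obj) (alpha : Hm B B) (beta : Hm C B)
    (delta : Hm C C) (m : Hm B C) : Prop :=
  xcomp m alpha = xdag beta /\ dpositive (delta - xcomp m beta).

Section Gauss.
Variable Xo : Obj.

Record gtriple (A B : Obj) := GT { gf : Hm A B; gp : Hm B B; gx : Hm Xo B }.

Definition is_gmap (A B : Obj) (F : gtriple A B) : Prop := dpositive (gp F).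

Definition gId (A : Obj) : gtriple A A := GT (xid A) 0 0.
Definition gcomp (A B C : Obj) (G : gtriple B C) (F : gtriple A B) : gtriple A C :=
  GT (xcomp (gf G) (gf F))
     (gp G + xcomp (gf G) (xcomp (gp F) (xdag (gf G))))
     (gx G + xcomp (gf G) (gx F)).
Definition gtensor (A B C D : Obj) (F : gtriple A B) (G : gtriple C D) :
    gtriple (bip A C) (bip B D) :=
  GT (msum (gf F) (gf G)) (msum (gp F) (gp G)) (mcol (gx F) (gx G)).
Definition gcopy (A : Obj) : gtriple A (bip A A) := GT (mcol (xid A) (xid A)) 0 0.
Definition gdel (A : Obj) : gtriple A zob := GT 0 0 0.
Definition glift (A B : Obj) (f : Hm A B) : gtriple A B := GT f 0 0.

(* G : B (x) A -> C is a conditional of F : A -> B (x) C: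
   (Id_B (x) G) o (copy_B (x) Id_A) o (Id_B (x) del_C (x) Id_A) o (F (x) Id_A) o copy_A = F,
   with the (implicit in the paper) associator and unitor written explicitly. *)
Definition is_conditional (A B C : Obj) (F : gtriple A (bip B C))
    (G : gtriple (bip B A) C) : Prop :=
  is_gmap G /\
  gcomp (gtensor (gId B) G)
  (gcomp (glift (bassoc B B A))
  (gcomp (gtensor (gcopy B) (gId A))
  (gcomp (gtensor (glift (brunit B)) (gId A))
  (gcomp (gtensor (gtensor (gId B) (gdel C)) (gId A))
  (gcomp (gtensor F (gId A))
         (gcopy A)))))) = F.

End Gauss.
End Matrices.

(* Main.v *)
Require Import Defs.
From HB Require Import structures.
From mathcomp Require Import all_boot all_algebra.
Import GRing.Theory.
Local Open Scope ring_scope.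

Lemma idem0 (V : zmodType) (x : V) : x + x = x -> x = 0.
Proof. by move=> /(congr1 (fun z => z - x)); rewrite addrK subrr. Qed.

Section Lems.
Variable X : DagAddCat.

Lemma comp0l (A B C : Ob X) (f : XHom X A B) : xcomp (0 : XHom X B C) f = 0.
Proof. by apply: idem0; rewrite -comp_addl addr0. Qed.
Lemma comp0r (A B C : Ob X) (g : XHom X B C) : xcomp g (0 : XHom X A B) = 0.
Proof. by apply: idem0; rewrite -comp_addr addr0. Qed.
Lemma compNl (A B C : Ob X) (g : XHom X B C) (f : XHom X A B) : xcomp (- g) f = - xcomp g f.
Proof. by apply/eqP; rewrite -addr_eq0 -comp_addl addNr comp0l. Qed.
Lemma compNr (A B C : Ob X) (g : XHom X B C) (f : XHom X A B) : xcomp g (- f) = - xcomp g f.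
Proof. by apply/eqP; rewrite -addr_eq0 -comp_addr addNr comp0r. Qed.
Lemma dag0 (A B : Ob X) : xdag (0 : XHom X A B) = 0.
Proof. by apply: idem0; rewrite -dag_add addr0. Qed.
Lemma dagN (A B : Ob X) (f : XHom X A B) : xdag (- f) = - xdag f.
Proof. by apply/eqP; rewrite -addr_eq0 -dag_add addNr dag0. Qed.
Lemma dag_io1 (A B : Ob X) : xdag (io1 A B) = pi1 A B.
Proof. by rewrite -dag_pi1 dag_invol. Qed.
Lemma dag_io2 (A B : Ob X) : xdag (io2 A B) = pi2 A B.
Proof. by rewrite -dag_pi2 dag_invol. Qed.
Lemma pi1_io1h (A B D : Ob X) (h : XHom X D A) : xcomp (pi1 A B) (xcomp (io1 A B) h) = h.
Proof. by rewrite comp_assoc pi1_io1 comp_id_l. Qed.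
Lemma pi2_io2h (A B D : Ob X) (h : XHom X D B) : xcomp (pi2 A B) (xcomp (io2 A B) h) = h.
Proof. by rewrite comp_assoc pi2_io2 comp_id_l. Qed.
Lemma pi1_io2h (A B D : Ob X) (h : XHom X D B) : xcomp (pi1 A B) (xcomp (io2 A B) h) = 0.
Proof. by rewrite comp_assoc pi1_io2 comp0l. Qed.
Lemma pi2_io1h (A B D : Ob X) (h : XHom X D A) : xcomp (pi2 A B) (xcomp (io1 A B) h) = 0.
Proof. by rewrite comp_assoc pi2_io1 comp0l. Qed.

Lemma into_ext (A B D : Ob X) (u v : XHom X D (bip A B)) :
  xcomp (pi1 A B) u = xcomp (pi1 A B) v -> xcomp (pi2 A B) u = xcomp (pi2 A B) v -> u = v.
Proof.
move=> h1 h2; rewrite -(comp_id_l u) -(comp_id_l v) -bip_id !comp_addl.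
by rewrite -!comp_assoc h1 h2.
Qed.
Lemma from_ext (A B D : Ob X) (u v : XHom X (bip A B) D) :
  xcomp u (io1 A B) = xcomp v (io1 A B) -> xcomp u (io2 A B) = xcomp v (io2 A B) -> u = v.
Proof.
move=> h1 h2; rewrite -(comp_id_r u) -(comp_id_r v) -bip_id !comp_addr.
by rewrite !comp_assoc h1 h2.
Qed.

Lemma colh (A B C D : Ob X) (a : XHom X A B) (b : XHom X A C) (h : XHom X D A) :
  xcomp (mcol a b) h = mcol (xcomp a h) (xcomp b h).
Proof. by rewrite /mcol comp_addl -!comp_assoc. Qed.
Lemma rowcol (A B C D : Ob X) (a : XHom X A D) (b : XHom X B D) (c : XHom X C A) (d : XHom X C B) :
  xcomp (mrow a b) (mcol c d) = xcomp a c + xcomp b d.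
Proof.
rewrite /mcol /mrow comp_addl !comp_addr -!comp_assoc.
by rewrite pi1_io1h pi1_io2h pi2_io1h pi2_io2h !comp0r addr0 add0r.
Qed.
Lemma hrow (A B C D : Ob X) (a : XHom X A C) (b : XHom X B C) (h : XHom X C D) :
  xcomp h (mrow a b) = mrow (xcomp h a) (xcomp h b).
Proof. by rewrite /mrow comp_addr !comp_assoc. Qed.
Lemma pi1col (A B C : Ob X) (a : XHom X A B) (b : XHom X A C) : xcomp (pi1 B C) (mcol a b) = a.
Proof. by rewrite /mcol comp_addr pi1_io1h pi1_io2h addr0. Qed.
Lemma pi2col (A B C : Ob X) (a : XHom X A B) (b : XHom X A C) : xcomp (pi2 B C) (mcol a b) = b.
Proof. by rewrite /mcol comp_addr pi2_io1h pi2_io2h add0r. Qed.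
Lemma dagcol (A B C : Ob X) (a : XHom X A B) (b : XHom X A C) :
  xdag (mcol a b) = mrow (xdag a) (xdag b).
Proof. by rewrite /mcol /mrow dag_add !dag_comp !dag_io1 dag_io2. Qed.
Lemma dagrow (A B C : Ob X) (a : XHom X A C) (b : XHom X B C) :
  xdag (mrow a b) = mcol (xdag a) (xdag b).
Proof. by rewrite /mcol /mrow dag_add !dag_comp dag_pi1 dag_pi2. Qed.
Lemma addcol (A B C : Ob X) (a c : XHom X A B) (b d : XHom X A C) :
  mcol a b + mcol c d = mcol (a + c) (b + d).
Proof. by rewrite /mcol !comp_addr addrACA. Qed.
Lemma addrow (A B C : Ob X) (a c : XHom X A C) (b d : XHom X B C) :
  mrow a b + mrow c d = mrow (a + c) (b + d).
Proof. by rewrite /mrow !comp_addl addrACA. Qed.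

Definition lcol {A B C : Ob X} (a : XHom X A B) (b : XHom X A C) := locked (mcol a b).
Definition lrow {A B C : Ob X} (a : XHom X A C) (b : XHom X B C) := locked (mrow a b).
Lemma mcolL (A B C : Ob X) (a : XHom X A B) (b : XHom X A C) : mcol a b = lcol a b.
Proof. by rewrite /lcol -lock. Qed.
Lemma mrowL (A B C : Ob X) (a : XHom X A C) (b : XHom X B C) : mrow a b = lrow a b.
Proof. by rewrite /lrow -lock. Qed.
Lemma Lcolh (A B C D : Ob X) (a : XHom X A B) (b : XHom X A C) (h : XHom X D A) :
  xcomp (lcol a b) h = lcol (xcomp a h) (xcomp b h).
Proof. by rewrite -!mcolL colh. Qed.
Lemma Lrowcol (A B C D : Ob X) (a : XHom X A D) (b : XHom X B D) (c : XHom X C A) (d : XHom X C B) :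
  xcomp (lrow a b) (lcol c d) = xcomp a c + xcomp b d.
Proof. by rewrite -mcolL -mrowL rowcol. Qed.
Lemma Lhrow (A B C D : Ob X) (a : XHom X A C) (b : XHom X B C) (h : XHom X C D) :
  xcomp h (lrow a b) = lrow (xcomp h a) (xcomp h b).
Proof. by rewrite -!mrowL hrow. Qed.
Lemma Lpi1col (A B C : Ob X) (a : XHom X A B) (b : XHom X A C) : xcomp (pi1 B C) (lcol a b) = a.
Proof. by rewrite -mcolL pi1col. Qed.
Lemma Lpi2col (A B C : Ob X) (a : XHom X A B) (b : XHom X A C) : xcomp (pi2 B C) (lcol a b) = b.
Proof. by rewrite -mcolL pi2col. Qed.
Lemma Ldagcol (A B C : Ob X) (a : XHom X A B) (b : XHom X A C) :
  xdag (lcol a b) = lrow (xdag a) (xdag b).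
Proof. by rewrite -mcolL -mrowL dagcol. Qed.
Lemma Ldagrow (A B C : Ob X) (a : XHom X A C) (b : XHom X B C) :
  xdag (lrow a b) = lcol (xdag a) (xdag b).
Proof. by rewrite -mcolL -mrowL dagrow. Qed.
Lemma Laddcol (A B C : Ob X) (a c : XHom X A B) (b d : XHom X A C) :
  lcol a b + lcol c d = lcol (a + c) (b + d).
Proof. by rewrite -!mcolL addcol. Qed.
Lemma Laddrow (A B C : Ob X) (a c : XHom X A C) (b d : XHom X B C) :
  lrow a b + lrow c d = lrow (a + c) (b + d).
Proof. by rewrite -!mrowL addrow. Qed.
Lemma Lcol00 (A B C : Ob X) : lcol (0 : XHom X A B) (0 : XHom X A C) = 0.
Proof. by rewrite -mcolL /mcol !comp0r addr0. Qed.
Lemma Lrow00 (A B C : Ob X) : lrow (0 : XHom X A C) (0 : XHom X B C) = 0.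
Proof. by rewrite -mrowL /mrow !comp0l addr0. Qed.
Lemma Lrowio1 (A B C : Ob X) (a : XHom X A C) (b : XHom X B C) : xcomp (lrow a b) (io1 A B) = a.
Proof. by rewrite -mrowL -(dag_invol (io1 A B)) dag_io1 -[mrow a b]dag_invol dagrow -dag_comp pi1col dag_invol. Qed.
Lemma Lrowio2 (A B C : Ob X) (a : XHom X A C) (b : XHom X B C) : xcomp (lrow a b) (io2 A B) = b.
Proof. by rewrite -mrowL -(dag_invol (io2 A B)) dag_io2 -[mrow a b]dag_invol dagrow -dag_comp pi2col dag_invol. Qed.
Lemma Lrowio1h (A B C D : Ob X) (a : XHom X A C) (b : XHom X B C) (h : XHom X D A) :
  xcomp (lrow a b) (xcomp (io1 A B) h) = xcomp a h.
Proof. by rewrite comp_assoc Lrowio1. Qed.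
Lemma Lrowio2h (A B C D : Ob X) (a : XHom X A C) (b : XHom X B C) (h : XHom X D B) :
  xcomp (lrow a b) (xcomp (io2 A B) h) = xcomp b h.
Proof. by rewrite comp_assoc Lrowio2. Qed.
Lemma Lswap (A1 A2 B1 B2 : Ob X) (a : XHom X A1 B1) (b : XHom X A1 B2) (c : XHom X A2 B1) (d : XHom X A2 B2) :
  lrow (lcol a b) (lcol c d) = lcol (lrow a c) (lrow b d).
Proof.
rewrite -!mcolL -!mrowL /mrow /mcol !comp_addr !comp_addl !comp_assoc.
by rewrite addrACA.
Qed.
Lemma Lswap0r (A1 A2 B1 B2 : Ob X) (a : XHom X A1 B1) (b : XHom X A1 B2) :
  lrow (lcol a b) (0 : XHom X A2 (bip B1 B2)) = lcol (lrow a 0) (lrow b 0).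
Proof. by rewrite -(Lcol00 A2 B1 B2) Lswap. Qed.
Lemma Lswap0l (A1 A2 B1 B2 : Ob X) (c : XHom X A2 B1) (d : XHom X A2 B2) :
  lrow (0 : XHom X A1 (bip B1 B2)) (lcol c d) = lcol (lrow 0 c) (lrow 0 d).
Proof. by rewrite -(Lcol00 A1 B1 B2) Lswap. Qed.
End Lems.

Ltac simp := rewrite /msum /mblock /bassoc /brunit ?mcolL ?mrowL;
  repeat progress (rewrite ?dag_add ?dagN ?dag0 ?dag_comp ?dag_invol ?dag_id ?Ldagcol ?Ldagrow
     -?comp_assoc ?Lcolh ?Lrowcol ?Lhrow ?Lpi1col ?Lpi2col ?Laddcol ?Laddrow ?Lswap ?Lswap0r ?Lswap0l ?Lcol00 ?Lrow00 ?Lrowio1 ?Lrowio2 ?Lrowio1h ?Lrowio2h ?dag_pi1 ?dag_pi2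
     ?comp_addl ?comp_addr ?compNl ?compNr ?comp0l ?comp0r ?comp_id_l ?comp_id_r
     ?addr0 ?add0r ?oppr0).

Theorem mainTheorem7 (X : DagAddCat) (Xo A B C : Ob X)
  (f : XHom X A B) (g : XHom X A C) (alpha : XHom X B B) (beta : XHom X C B)
  (delta : XHom X C C) (s : XHom X Xo B) (t : XHom X Xo C) (m : XHom X B C) :
  dpositive (mblock alpha beta (xdag beta) delta) ->
  cond_generator alpha beta delta m ->
  is_conditional
    (GT (mcol f g) (mblock alpha beta (xdag beta) delta) (mcol s t))
    (GT (mrow m (g - xcomp m f)) (delta - xcomp m beta) (t - xcomp m s)).
Proof.
move=> hpos [hm hd]; split; first exact: hd.
set Sg := mblock alpha beta (xdag beta) delta.
set Gf := mrow m (g - xcomp m f).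
set Gp := delta - xcomp m beta.
set Gx := t - xcomp m s.
rewrite [gcomp (gtensor _ (gId Xo A)) (gcopy Xo A)]
  (_ : _ = GT (mcol (mcol f g) (xid A)) (msum Sg (0 : XHom X A A)) (mcol (mcol s t) (0 : XHom X Xo A))); last first.
  rewrite /gcomp /gtensor /gcopy /gId /=; congr GT; rewrite /Sg; simp; done.
rewrite [gcomp (gtensor (gtensor _ _) _) _]
  (_ : _ = GT (mcol (mcol f (0 : XHom X A zob)) (xid A)) (msum (msum alpha (0 : XHom X zob zob)) (0 : XHom X A A))
             (mcol (mcol s (0 : XHom X Xo zob)) (0 : XHom X Xo A))); last first.
  rewrite /gcomp /gtensor /gdel /gId /=; congr GT; rewrite /Sg; simp; done.
rewrite [gcomp (gtensor (glift _ _) _) _]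
  (_ : _ = GT (mcol f (xid A)) (msum alpha (0 : XHom X A A)) (mcol s (0 : XHom X Xo A))); last first.
  rewrite /gcomp /gtensor /glift /gId /=; congr GT; simp; done.
rewrite [gcomp (gtensor (gcopy _ _) _) _]
  (_ : _ = GT (mcol (mcol f f) (xid A)) (msum (mblock alpha alpha alpha alpha) (0 : XHom X A A))
              (mcol (mcol s s) (0 : XHom X Xo A))); last first.
  rewrite /gcomp /gtensor /gcopy /gId /=; congr GT; simp; done.
rewrite [gcomp (glift _ _) _]
  (_ : _ = GT (mcol f (mcol f (xid A))) (mblock alpha (mrow alpha (0 : XHom X A B)) (mcol alpha (0 : XHom X B A)) (msum alpha (0 : XHom X A A)))
              (mcol s (mcol s (0 : XHom X Xo A)))); last first.
  rewrite /gcomp /glift /=; congr GT; simp; done.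
have hsa : xdag Sg = Sg.
  by move: hpos; rewrite -/Sg => -[Y [phi ->]]; rewrite dag_comp dag_invol.
have halpha : xdag alpha = alpha.
  move: (congr1 (fun z => xcomp (pi1 B C) (xcomp z (io1 B C))) hsa).
  rewrite /= /Sg; simp; rewrite -?mcolL -?mrowL ?pi1col ?rowcol ?comp_id_l ?comp0l ?addr0 //.
have hb : xcomp alpha (xdag m) = beta by rewrite -{1}halpha -dag_comp hm dag_invol.
rewrite /gcomp /gtensor /gId /Gf /Gp /Gx /Sg /=; congr GT; simp.
- by rewrite addrC subrK.
- by rewrite hb hm subrK.
- by rewrite subrK.
Qed.
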